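(* Let $\gamma:[0,1]\to\mathbb{R}^2$ be a $C^1$ curve of constant speed $c>0$ with $\gamma(0)\neq\gamma(1)$, whose turning angle function $\theta$ satisfies $\theta(1)-\theta(0)=2\pi m$ with $0\neq m\in\mathbb{Z}$. Let $\sigma\in S_k$ and $z_h\in Z_k$. Then $\gamma$ is $(k,1)$-rearrangeable with respect to $\sigma$ if and only if $\gamma$ is $(k,1)$-rearrangeable with respect to the composition $\sigma\cdot z_h$ (defined by $(\sigma\cdot z_h)(i)=\sigma(z_h(i))$).
   Context: A turning angle function is a continuous $\theta$ with $\gamma'(s)=c(\cos\theta(s),\sin\theta(s))$. Concatenation $\alpha*\beta$ of two $C^1$ planar curves of the same constant speed ($\alpha$ on $[a_1,b_1]$, $\beta$ on $[a_2,b_2]$) is the curve equal to $\alpha(s+a_1)$ for $s\le b_1-a_1$ and to $T(\beta(s-(b_1-a_1)+a_2))$ afterwards, where $T$ is the orientation-preserving rigid motion sending $\beta(a_2)$ to $\alpha(b_1)$ and the unit tangent of $\beta$ at $a_2$ to that of $\alpha$ at $b_1$; it is associative. Let $D_k=\{(c_1,\dots,c_{k-1})\in[0,1]^{k-1}: 0\le c_1\le\dots\le c_{k-1}\le 1\}$; set $c_0=0$, $c_k=1$. For $C\in D_k$ let $\gamma_i$ be the restriction of $\gamma$ to $[c_{i-1},c_i]$ (degenerate arcs are points carrying the tangent direction of $\gamma$). For $\sigma\in S_k$, $r_{\sigma,C}:=\gamma_{\sigma(1)}*\dots*\gamma_{\sigma(k)}$ over $[0,1]$. $\gamma$ is $(k,1)$-rearrangeable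 with respect to $\sigma$ if there exist $C\in D_k$ such that $r_{\sigma,C}$ is a closed $C^1$ curve (end point equals start point and the tangents there agree). $Z_k=\{z_0,\dots,z_{k-1}\}$ with $z_h(i)=i+h$ if $i\le k-h$ and $z_h(i)=i+h-k$ if $i>k-h$. *)

(* Defs.v *)
From Stdlib Require Import Reals ZArith.
From mathcomp Require Import all_boot all_fingroup.
From mathcomp Require Import ssralg zmodp.

Set Implicit Arguments.
Unset Strict Implicit.
Unset Printing Implicit Defensive.

Local Open Scope R_scope.

(* Points / vectors of the plane R^2, identified with complex numbers so that
   rotations are multiplications by unit complex numbers. *)
Definition pt := (R * R)%type.
Definition padd (u v : pt) : pt := (u.1 + v.1, u.2 + v.2).
Definition psub (u v : pt) : pt := (u.1 - v.1, u.2 - v.2).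
Definition cmul (u v : pt) : pt := (u.1 * v.1 - u.2 * v.2, u.1 * v.2 + u.2 * v.1).
Definition pnorm (u : pt) : R := sqrt (u.1 * u.1 + u.2 * u.2).
Definition pscale (r : R) (u : pt) : pt := (r * u.1, r * u.2).
Definition cdiv (u v : pt) : pt :=
  pscale (/ (v.1 * v.1 + v.2 * v.2)) (cmul u (v.1, - v.2)).
Definition unitv (u : pt) : pt := pscale (/ pnorm u) u.

Definition rigid (w t : pt) (x : pt) : pt := padd (cmul w x) t.

Definition has_deriv01 (f df : R -> pt) : Prop :=
  forall s, 0 <= s <= 1 -> forall eps, 0 < eps -> exists delta, 0 < delta /\
    forall t, 0 <= t <= 1 -> t <> s -> Rabs (t - s) < delta ->
      Rabs ((fst (f t) - fst (f s)) / (t - s) - fst (df s)) < eps /\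
      Rabs ((snd (f t) - snd (f s)) / (t - s) - snd (df s)) < eps.

Definition cont01 (g : R -> R) : Prop :=
  forall s, 0 <= s <= 1 -> forall eps, 0 < eps -> exists delta, 0 < delta /\
    forall t, 0 <= t <= 1 -> Rabs (t - s) < delta -> Rabs (g t - g s) < eps.

(* ---------- Rearrangements ----------
   Indices are 0-based: 'I_k = {0,..,k-1} stands for the paper's {1,..,k}
   (paper index i <-> our i-1).  We take k = n.+1.
   A cut sequence C in D_k is a function cp : nat -> R with cp 0 = 0,
   cp k = 1 and cp 0 <= cp 1 <= ... <= cp k; arc number j ('I_k) is the
   restriction of gamma to [cp j, cp (j+1)]. *)

Definition cuts (k : nat) (cp : nat -> R) : Prop :=
  cp 0%N = 0 /\ cp k = 1 /\ forall i, (i < k)%N -> cp i <= cp i.+1.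

Section Rearr.
Variables (gam dgam : R -> pt) (n : nat) (sigma : {perm 'I_n.+1}) (cp : nat -> R).

(* the p-th arc of the concatenation is gamma_{sigma(p)} *)
Definition sidx (p : nat) : nat := nat_of_ord (sigma (inord p)).
Definition arc_a (p : nat) : R := cp (sidx p).
Definition arc_b (p : nat) : R := cp (sidx p).+1.
Definition arc_len (p : nat) : R := arc_b p - arc_a p.

Fixpoint start_time (p : nat) : R :=
  match p with 0%N => 0 | q.+1 => start_time q + arc_len q end.

(* rigid motion (w, t) applied to the p-th arc: identity for the first arc;
   the motion for arc q+1 sends gamma(arc_a (q+1)) to the (moved) end point
   of arc q, and the unit tangent of gamma at arc_a (q+1) to the (moved)
   unit tangent of gamma at arc_b q.  By associativity of *, this left fold
   is the concatenation gamma_{sigma 1} * ... * gamma_{sigma k}. *)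
Fixpoint motion (p : nat) : pt * pt :=
  match p with
  | 0%N => ((1, 0), (0, 0))
  | q.+1 =>
      let w := (motion q).1 in
      let t := (motion q).2 in
      let w' := cmul w (cdiv (unitv (dgam (arc_b q))) (unitv (dgam (arc_a q.+1)))) in
      let t' := psub (rigid w t (gam (arc_b q))) (cmul w' (gam (arc_a q.+1))) in
      (w', t')
  end.

(* the arc to which parameter s belongs: the largest p <= n with
   start_time p <= s (0 if none) *)
Fixpoint pick (p : nat) (s : R) : nat :=
  match p with
  | 0%N => 0%N
  | q.+1 => if Rle_dec (start_time q.+1) s then q.+1 else pick q s
  end.
Definition piece (s : R) : nat := pick n s.

Definition rcurve (s : R) : pt :=
  let p := piece s in
  rigid (motion p).1 (motion p).2 (gam (arc_a p + (s - start_time p))).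
Definition rtangent (s : R) : pt :=
  let p := piece s in
  cmul (motion p).1 (dgam (arc_a p + (s - start_time p))).

Definition closed_rearr : Prop :=
  rcurve 1 = rcurve 0 /\ rtangent 1 = rtangent 0.
End Rearr.

Definition rearrangeable (gam dgam : R -> pt) (n : nat) (sigma : {perm 'I_n.+1}) : Prop :=
  exists cp : nat -> R, cuts n.+1 cp /\ closed_rearr gam dgam sigma cp.

Definition zperm (n : nat) (h : 'I_n.+1) : {perm 'I_n.+1} :=
  perm (@GRing.addIr _ h).

(* (sigma . tau)(i) = sigma (tau i); note MathComp's (tau * sigma) x = sigma (tau x) *)
Definition comp_perm (n : nat) (sigma tau : {perm 'I_n.+1}) : {perm 'I_n.+1} :=
  (tau * sigma)%g.

Lemma zpermE (n : nat) (h i : 'I_n.+1) : zperm h i = (i + h)%R.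
Proof. by rewrite /zperm permE. Qed.
Lemma comp_permE (n : nat) (sigma tau : {perm 'I_n.+1}) i : comp_perm sigma tau i = sigma (tau i).
Proof. by rewrite /comp_perm permM. Qed.

(* Main.v *)
From HB Require Import structures.
Require Import Defs.
From Stdlib Require Import Reals ZArith Lra Psatz.
From mathcomp Require Import all_boot all_fingroup.
From mathcomp Require Import ssralg zmodp.

Set Implicit Arguments.
Local Open Scope R_scope.

Definition E := (pt * pt)%type.
Definition eid : E := ((1,0),(0,0)).
Definition emul (A B : E) : E := (cmul A.1 B.1, padd (cmul A.1 B.2) A.2).

Ltac desE := repeat match goal with
  | A : E |- _ => destruct A
  | A : pt |- _ => destruct A
  | A : (R*R)%type |- _ => destruct A end.

Ltac pairs := repeat match goal with |- (_,_) = (_,_) => f_equal end.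
Ltac solveE := desE; unfold emul, eid, cmul, padd, psub, rigid; simpl;
   pairs; ring.

Lemma emulA A B C : emul (emul A B) C = emul A (emul B C).
Proof. solveE. Qed.
Lemma emul1 A : emul eid A = A.
Proof. solveE. Qed.
Lemma emul1r A : emul A eid = A.
Proof. solveE. Qed.

Lemma swap_id A B : emul A B = eid -> emul B A = eid.
Proof.
  destruct A as [[a1 a2][a3 a4]], B as [[b1 b2][b3 b4]].
  unfold emul, eid, cmul, padd; simpl. intros H. inversion H as [[H1 H2 H3 H4]].
  assert (e3 : a3 = - (a1*b3 - a2*b4)) by lra.
  assert (e4 : a4 = - (a1*b4 + a2*b3)) by lra.
  subst a3 a4.
  f_equal; f_equal.
  - lra.
  - lra.
  - replace (b1 * - (a1 * b3 - a2 * b4) - b2 * - (a1 * b4 + a2 * b3) + b3)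
      with ((1 - (a1*b1 - a2*b2)) * b3 + (a1*b2+a2*b1)*b4) by ring.
    rewrite H1 H2; ring.
  - replace (b1 * - (a1 * b4 + a2 * b3) + b2 * - (a1 * b3 - a2 * b4) + b4)
      with ((1 - (a1*b1 - a2*b2)) * b4 - (a1*b2+a2*b1)*b3) by ring.
    rewrite H1 H2; ring.
Qed.

Definition conj (u : pt) : pt := (u.1, - u.2).
Definition unit (u : pt) := u.1 * u.1 + u.2 * u.2 = 1.
Definition Fr (u g : pt) : E := (u, g).
Definition Finv (u g : pt) : E := (conj u, pscale (-1) (cmul (conj u) g)).

Lemma FinvK u g : unit u -> emul (Finv u g) (Fr u g) = eid.
Proof.
  unfold unit; destruct u as [u1 u2], g as [g1 g2]; simpl; intros Hu.
  unfold emul, Finv, Fr, eid, cmul, padd, pscale, conj; simpl.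
  f_equal; f_equal; try ring. lra.
Qed.

Lemma cdiv_unit u v : unit v -> cdiv u v = cmul u (conj v).
Proof.
  unfold unit, cdiv; destruct u as [u1 u2], v as [v1 v2]; simpl; intros Hv.
  rewrite Hv Rinv_1. unfold pscale, cmul, conj; simpl. f_equal; ring.
Qed.

Lemma FinvK' u g : unit u -> emul (Fr u g) (Finv u g) = eid.
Proof.
  intros Hu; apply swap_id, FinvK, Hu.
Qed.

Definition Fx (gam dgam : R -> pt) x := Fr (unitv (dgam x)) (gam x).
Definition Fi (gam dgam : R -> pt) x := Finv (unitv (dgam x)) (gam x).
Definition G (gam dgam : R -> pt) (cp : nat -> R) j :=
  emul (Fi gam dgam (cp j)) (Fx gam dgam (cp j.+1)).
Definition Pprod gam dgam {n} (sigma : {perm 'I_n.+1}) cp p :=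
  foldr emul eid (map (fun q => G gam dgam cp (sidx sigma q)) (iota 0 p)).

Lemma foldr_cat (s1 s2 : seq E) :
  foldr emul eid (s1 ++ s2) = emul (foldr emul eid s1) (foldr emul eid s2).
Proof.
  elim: s1 => [|x s IH] /=; first by rewrite emul1.
  by rewrite IH emulA.
Qed.

Lemma Pprod_S gam dgam n (sigma : {perm 'I_n.+1}) cp p :
  Pprod gam dgam sigma cp p.+1 =
  emul (Pprod gam dgam sigma cp p) (G gam dgam cp (sidx sigma p)).
Proof.
  by rewrite /Pprod -addn1 iotaD map_cat foldr_cat /= emul1r add0n.
Qed.

Lemma motion_step gam dgam n (sigma : {perm 'I_n.+1}) cp q :
  unit (unitv (dgam (arc_a sigma cp q.+1))) ->
  motion gam dgam sigma cp q.+1 =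
  emul (emul (motion gam dgam sigma cp q) (Fx gam dgam (arc_b sigma cp q)))
       (Fi gam dgam (arc_a sigma cp q.+1)).
Proof.
  move=> Hu. rewrite [LHS]/= cdiv_unit //.
  move: Hu; rewrite /Fx /Fi.
  destruct (motion gam dgam sigma cp q) as [w t].
  destruct (unitv (dgam (arc_a sigma cp q.+1))) as [a1 a2].
  destruct (unitv (dgam (arc_b sigma cp q))) as [b1 b2].
  destruct (gam (arc_a sigma cp q.+1)) as [g1 g2].
  destruct (gam (arc_b sigma cp q)) as [h1 h2].
  move=> _. solveE.
Qed.

Lemma inv_a gam dgam n (sigma : {perm 'I_n.+1}) cp :
  (forall p, unit (unitv (dgam (arc_a sigma cp p)))) ->
  forall p, emul (motion gam dgam sigma cp p) (Fx gam dgam (arc_a sigma cp p)) =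
            emul (Fx gam dgam (arc_a sigma cp 0)) (Pprod gam dgam sigma cp p).
Proof.
  move=> Hu; elim=> [|p IH].
  - by rewrite /Pprod /= emul1 emul1r.
  - rewrite motion_step // emulA FinvK // emul1r Pprod_S -emulA -IH emulA.
    rewrite /G -/(arc_a sigma cp p) -/(arc_b sigma cp p).
    by rewrite -(emulA (Fx _ _ _)) FinvK' // emul1.
Qed.
Lemma Rplus_assoc' : associative Rplus.
Proof. move=> x y z; ring. Qed.
HB.instance Definition _ := Monoid.isComLaw.Build R 0 Rplus Rplus_assoc' Rplus_comm Rplus_0_l.

Lemma st_big n (sigma : {perm 'I_n.+1}) cp p :
  start_time sigma cp p = \big[Rplus/0]_(0 <= i < p) arc_len sigma cp i.
Proof.
  elim: p => [|p IH] /=; first by rewrite big_nil.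
  by rewrite big_nat_recr //= IH.
Qed.

Lemma tele (cp : nat -> R) k :
  \big[Rplus/0]_(i < k) (cp i.+1 - cp i) = cp k - cp 0%N.
Proof.
  elim: k => [|k IH]; first by rewrite big_ord0; ring.
  rewrite big_ord_recr /= IH; ring.
Qed.

Lemma st_total n (sigma : {perm 'I_n.+1}) cp :
  start_time sigma cp n.+1 = cp n.+1 - cp 0%N.
Proof.
  rewrite st_big big_mkord -tele.
  rewrite (eq_bigr (fun i : 'I_n.+1 => cp (sigma i).+1 - cp (sigma i))); last first.
    by move=> i _; rewrite /arc_len /arc_b /arc_a /sidx inord_val.
  by rewrite [RHS](reindex_inj (@perm_inj _ sigma)).
Qed.

Lemma cuts_mono k cp : cuts k cp -> forall i j, (i <= j)%N -> (j <= k)%N -> cp i <= cp j.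
Proof.
  move=> [_ [_ Hm]] i; elim=> [|j IH] Hij Hjk.
  - move: Hij; rewrite leqn0 => /eqP ->; lra.
  - move: Hij; rewrite leq_eqVlt => /orP [/eqP -> | Hij]; first lra.
    have := Hm j Hjk. have := IH Hij (ltnW Hjk). lra.
Qed.

Lemma cuts_range k cp : cuts k cp -> forall i, (i <= k)%N -> 0 <= cp i <= 1.
Proof.
  move=> Hc i Hi. have [H0 [H1 _]] := Hc.
  have := @cuts_mono _ _ Hc _ _ (leq0n i) Hi. have := @cuts_mono _ _ Hc _ _ Hi (leqnn k). lra.
Qed.

Lemma arc_a_range n (sigma : {perm 'I_n.+1}) cp p :
  cuts n.+1 cp -> 0 <= arc_a sigma cp p <= 1.
Proof. move=> Hc; apply: (cuts_range Hc); exact: ltnW (ltn_ord _). Qed.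

Lemma arc_b_range n (sigma : {perm 'I_n.+1}) cp p :
  cuts n.+1 cp -> 0 <= arc_b sigma cp p <= 1.
Proof. move=> Hc; apply: (cuts_range Hc); exact: ltn_ord. Qed.

Lemma arc_len_ge0 n (sigma : {perm 'I_n.+1}) cp p :
  cuts n.+1 cp -> 0 <= arc_len sigma cp p.
Proof.
  move=> Hc; rewrite /arc_len /arc_b /arc_a.
  have := @cuts_mono _ _ Hc _ _ (leqnSn (sidx sigma p)) (ltn_ord _). lra.
Qed.

Lemma st_ge0 n (sigma : {perm 'I_n.+1}) cp p :
  cuts n.+1 cp -> 0 <= start_time sigma cp p.
Proof.
  move=> Hc; elim: p => [|p IH] /=; first lra.
  have := arc_len_ge0 sigma p Hc. lra.
Qed.

Lemma pick_spec n (sigma : {perm 'I_n.+1}) cp s q :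
  (Defs.pick sigma cp q s <= q)%N /\
  (Defs.pick sigma cp q s = 0%N \/ start_time sigma cp (Defs.pick sigma cp q s) <= s).
Proof.
  elim: q => [|q [IH1 IH2]] /=; first by split; [|left].
  case: Rle_dec => H; first by split; [|right].
  split; [exact: leqW | exact IH2].
Qed.

Lemma pick_top n (sigma : {perm 'I_n.+1}) cp s q :
  start_time sigma cp q <= s -> Defs.pick sigma cp q s = q.
Proof. case: q => [|q] //= H. by case: Rle_dec. Qed.

Lemma unitv_cs c t : 0 < c -> unitv (c * cos t, c * sin t) = (cos t, sin t).
Proof.
  move=> Hc; rewrite /unitv /pnorm /=.
  replace (c * cos t * (c * cos t) + c * sin t * (c * sin t))
    with (c * c * (Rsqr (sin t) + Rsqr (cos t))) by (unfold Rsqr; ring).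
  rewrite sin2_cos2 Rmult_1_r sqrt_square; last lra.
  rewrite /pscale /=; f_equal; field; lra.
Qed.

Lemma unit_cs t : unit (cos t, sin t).
Proof. rewrite /unit /=. have := sin2_cos2 t. rewrite /Rsqr. lra. Qed.

Lemma cmul_pscale w c u : cmul w (pscale c u) = pscale c (cmul w u).
Proof. destruct w, u; rewrite /cmul /pscale /=; f_equal; ring. Qed.

Lemma pscale_inj c u v : c <> 0 -> pscale c u = pscale c v -> u = v.
Proof.
  destruct u as [u1 u2], v as [v1 v2]; rewrite /pscale /= => Hc [H1 H2].
  f_equal; [apply (Rmult_eq_reg_l c) | apply (Rmult_eq_reg_l c)]; auto.
Qed.

Lemma Pprod_zero gam dgam n (sigma : {perm 'I_n.+1}) cp :
  cuts n.+1 cp -> (forall p, unit (unitv (dgam (arc_a sigma cp p)))) ->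
  forall p, start_time sigma cp p = 0 -> Pprod gam dgam sigma cp p = eid.
Proof.
  move=> Hc Hu; elim=> [|p IH] //= Hs.
  have h1 := st_ge0 sigma p Hc. have h2 := arc_len_ge0 sigma p Hc.
  rewrite Pprod_S IH; last lra.
  rewrite emul1 /G.
  have -> : cp (sidx sigma p).+1 = cp (sidx sigma p).
    move: h2 Hs; rewrite /arc_len /arc_b /arc_a; lra.
  exact: FinvK (Hu p).
Qed.

Lemma closed_iff gam dgam c theta n (sigma : {perm 'I_n.+1}) cp :
  0 < c ->
  (forall s, 0 <= s <= 1 -> dgam s = (c * cos (theta s), c * sin (theta s))) ->
  cuts n.+1 cp ->
  closed_rearr gam dgam sigma cp <-> Pprod gam dgam sigma cp n.+1 = eid.
Proof.
  move=> Hc0 Hd Hc.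
  have HU : forall x, 0 <= x <= 1 -> unit (unitv (dgam x)).
    by move=> x Hx; rewrite Hd // unitv_cs //; apply: unit_cs.
  have HD : forall x, 0 <= x <= 1 -> dgam x = pscale c (unitv (dgam x)).
    move=> x Hx; rewrite Hd // unitv_cs // /pscale //.
  have Hua : forall p, unit (unitv (dgam (arc_a sigma cp p))).
    by move=> p; apply: HU; apply: arc_a_range.
  set a0 := arc_a sigma cp 0.
  set X := emul (Fx gam dgam a0) (Pprod gam dgam sigma cp n.+1).
  have KX : emul (motion gam dgam sigma cp n) (Fx gam dgam (arc_b sigma cp n)) = X.
    rewrite /X Pprod_S -emulA -inv_a // emulA /G -/(arc_a sigma cp n) -/(arc_b sigma cp n).
    by rewrite -(emulA (Fx _ _ _)) FinvK' ?emul1.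
  have Hsum : start_time sigma cp n + arc_len sigma cp n = 1.
    have := st_total sigma cp. have [H0 [H1 _]] := Hc. rewrite H0 H1 /=. lra.
  have Hl := arc_len_ge0 sigma n Hc.
  have Hp1 : piece sigma cp 1 = n.
    by rewrite /piece; apply: pick_top; lra.
  have R1 : rcurve gam dgam sigma cp 1 = X.2.
    rewrite /rcurve Hp1.
    replace (arc_a sigma cp n + (1 - start_time sigma cp n)) with (arc_b sigma cp n)
      by (move: Hsum; rewrite /arc_len; lra).
    by rewrite -KX.
  have T1 : rtangent gam dgam sigma cp 1 = pscale c X.1.
    rewrite /rtangent Hp1.
    replace (arc_a sigma cp n + (1 - start_time sigma cp n)) with (arc_b sigma cp n)
      by (move: Hsum; rewrite /arc_len; lra).
    rewrite -KX HD; last by apply: arc_b_range.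
    by rewrite cmul_pscale.
  set p0 := piece sigma cp 0.
  have Hs0 : start_time sigma cp p0 = 0.
    rewrite /p0 /piece.
    have [_ [->|H]] := pick_spec sigma cp 0 n; first by [].
    have := st_ge0 sigma (Defs.pick sigma cp n 0) Hc. lra.
  have K0 : emul (motion gam dgam sigma cp p0) (Fx gam dgam (arc_a sigma cp p0)) = Fx gam dgam a0.
    by rewrite inv_a // Pprod_zero // emul1r.
  have R0 : rcurve gam dgam sigma cp 0 = (Fx gam dgam a0).2.
    rewrite /rcurve -/p0 Hs0.
    replace (arc_a sigma cp p0 + (0 - 0)) with (arc_a sigma cp p0) by ring.
    by rewrite -K0.
  have T0 : rtangent gam dgam sigma cp 0 = pscale c (Fx gam dgam a0).1.
    rewrite /rtangent -/p0 Hs0.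
    replace (arc_a sigma cp p0 + (0 - 0)) with (arc_a sigma cp p0) by ring.
    rewrite -K0 HD; last by apply: arc_a_range.
    by rewrite cmul_pscale.
  rewrite /closed_rearr R1 T1 R0 T0; split.
  - move=> [H1 H2].
    have H3 := pscale_inj (Rgt_not_eq _ _ Hc0) H2.
    have HX : X = Fx gam dgam a0.
      by rewrite [X]surjective_pairing H1 H3 -surjective_pairing.
    have E1 : emul (Fi gam dgam a0) X = emul (Fi gam dgam a0) (Fx gam dgam a0) by rewrite HX.
    move: E1; rewrite /X -emulA /Fi /Fx FinvK; last exact: (Hua 0%N).
    by rewrite emul1.
  - by rewrite /X => ->; rewrite emul1r.
Qed.

From mathcomp Require Import zify.

Lemma sidx_shift n (sigma : {perm 'I_n.+1}) (h : 'I_n.+1) i :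
  (i < n.+1)%N ->
  sidx (comp_perm sigma (zperm h)) i = sidx sigma ((i + h) %% n.+1)%N.
Proof.
  move=> Hi; rewrite /sidx comp_permE zpermE; do 2 f_equal.
  apply: val_inj => /=. rewrite [in RHS]inordK; last by rewrite ltn_pmod.
  by rewrite inordK.
Qed.

Lemma list_rot gam dgam n (sigma : {perm 'I_n.+1}) (h : 'I_n.+1) cp :
  let L := map (fun q => G gam dgam cp (sidx sigma q)) (iota 0 n.+1) in
  map (fun q => G gam dgam cp (sidx (comp_perm sigma (zperm h)) q)) (iota 0 n.+1)
  = drop h L ++ take h L.
Proof.
  move=> L.
  have Hh := ltn_ord h.
  apply: (@eq_from_nth _ eid).
    by rewrite size_cat size_drop size_take !size_map size_iota Hh subnK // ltnW.
  move=> i; rewrite size_map size_iota => Hi.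
  rewrite (nth_map 0%N) ?size_iota // nth_iota // add0n sidx_shift //.
  rewrite nth_cat size_drop /L size_map size_iota.
  case: ifP => Hc.
  - rewrite nth_drop (nth_map 0%N) ?size_iota; last lia.
    rewrite nth_iota; last lia. rewrite add0n modn_small; last lia.
    by rewrite addnC.
  - rewrite nth_take; last lia.
    rewrite (nth_map 0%N) ?size_iota; last lia.
    rewrite nth_iota; last lia. rewrite add0n.
    have -> : (i + h = (i - (n.+1 - h)) + n.+1)%N by lia.
    rewrite modnDr modn_small //; lia.
Qed.

Lemma Pprod_rot gam dgam n (sigma : {perm 'I_n.+1}) (h : 'I_n.+1) cp :
  Pprod gam dgam sigma cp n.+1 = eid <->
  Pprod gam dgam (comp_perm sigma (zperm h)) cp n.+1 = eid.
Proof.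
  rewrite {2}/Pprod list_rot foldr_cat /Pprod -{1}(cat_take_drop h (map _ _)) foldr_cat.
  split; apply: swap_id.
Qed.

Unset Implicit Arguments.

Theorem lemma4p3 (gam dgam : R -> R * R) (c : R) (theta : R -> R) (m : Z)
    (n : nat) (sigma : {perm 'I_n.+1}) (h : 'I_n.+1) :
  0 < c ->
  has_deriv01 gam dgam ->
  cont01 theta ->
  (forall s, 0 <= s <= 1 -> dgam s = (c * cos (theta s), c * sin (theta s))) ->
  gam 0 <> gam 1 ->
  theta 1 - theta 0 = 2 * PI * IZR m ->
  m <> 0%Z ->
  (rearrangeable gam dgam sigma <-> rearrangeable gam dgam (comp_perm sigma (zperm h))).
Proof.
  move=> Hc0 _ _ Hd _ _ _.
  split=> [[cp [Hc Hcl]] | [cp [Hc Hcl]]]; exists cp; split=> //.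
  - apply (proj2 (@closed_iff gam dgam c theta n _ cp Hc0 Hd Hc)).
    apply (proj1 (Pprod_rot gam dgam sigma h cp)).
    exact (proj1 (@closed_iff gam dgam c theta n _ cp Hc0 Hd Hc) Hcl).
  - apply (proj2 (@closed_iff gam dgam c theta n _ cp Hc0 Hd Hc)).
    apply (proj2 (Pprod_rot gam dgam sigma h cp)).
    exact (proj1 (@closed_iff gam dgam c theta n _ cp Hc0 Hd Hc) Hcl).
Qed.
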